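(* On the cofree conilpotent cooperad $\mathcal{T}^c(M)$, the map $d_\psi H+Hd_\psi$ is zero in arity $1$ and is the identity in every arity $n\ge2$.
   Context: $M$ is the $\mathbb{S}$-module spanned by two arity-2 elements with trivial $\mathbb{S}_2$-action, $\mu$ of degree $1$ and $\beta$ of degree $2$. $\mathcal{T}^c(M)$ is spanned by rooted binary trees with leaves labeled $1,\dots,n$ and vertices decorated by $\mu$ or $\beta$ (arity 1 being spanned by the trivial tree); vertices are totally ordered via the planar (shuffle tree) representation, and Koszul signs refer to this order. Let $\psi:\mathcal{T}^c(M)\to M$ project onto $M$ and send $\mu\mapsto\beta$, $\beta\mapsto0$; its unique coderivation extension $d_\psi$ sends a decorated tree to the signed sum over its $\mu$-vertices of the tree with that $\mu$ replaced by $\beta$. For a binary tree $T$ and vertex $v$, let $m_v,n_v$ be the numbers of leaves above the two inputs of $v$, and $\omega(v)=m_vn_v$. Let $h:M\to M$ send $\beta\mapsto\mu$, $\mu\mapsto 0$. Define $H$ (degree $-1$) on a decorated tree with $n$ vertices as $\sum_v\frac{\omega(v)}{\binom{n+1}{2}}$ times the tree with $h$ applied to the decoration of $v$, with the Koszul sign. *)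

(* Defs.v *)
From mathcomp Require Import all_boot all_order all_algebra.
Set Implicit Arguments. Unset Strict Implicit. Unset Printing Implicit Defensive.
Import Order.TTheory GRing.Theory Num.Theory.
Local Open Scope ring_scope.

Inductive deco := Mu | Be.

Definition deco_deg (d : deco) : nat := if d is Mu then 1%N else 2%N.

(** Planar binary trees with labelled leaves and decorated internal vertices.
    A basis element of T^c(M)(n) is represented by its shuffle (planar)
    representative, see [valid_tree]. *)
Inductive tree := Leaf of nat | Node of deco & tree & tree.

Fixpoint tree_eqb (s t : tree) : bool :=
  match s, t with
  | Leaf i, Leaf j => i == j
  | Node d l r, Node d' l' r' =>
      [&& (deco_deg d == deco_deg d'), tree_eqb l l' & tree_eqb r r']
  | _, _ => false
  end.

Fixpoint leaf_labels (t : tree) : seq nat :=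
  match t with Leaf i => [:: i] | Node _ l r => leaf_labels l ++ leaf_labels r end.

Fixpoint nleaves (t : tree) : nat :=
  match t with Leaf _ => 1%N | Node _ l r => (nleaves l + nleaves r)%N end.

Fixpoint nvert (t : tree) : nat :=
  match t with Leaf _ => 0%N | Node _ l r => (nvert l + nvert r).+1 end.

Fixpoint min_leaf (t : tree) : nat :=
  match t with Leaf i => i | Node _ l r => minn (min_leaf l) (min_leaf r) end.

Fixpoint shuffle_tree (t : tree) : bool :=
  match t with
  | Leaf _ => true
  | Node _ l r => [&& (min_leaf l < min_leaf r)%N, shuffle_tree l & shuffle_tree r]
  end.

Definition valid_tree (n : nat) (t : tree) : bool :=
  perm_eq (leaf_labels t) (iota 1 n) && shuffle_tree t.

Fixpoint tree_deg (t : tree) : nat :=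
  match t with Leaf _ => 0%N | Node d l r => (deco_deg d + tree_deg l + tree_deg r)%N end.

Definition lc := seq (rat * tree).

Definition coef (x : lc) (S : tree) : rat :=
  \sum_(p <- x | tree_eqb p.2 S) p.1.

Definition sgn (k : nat) : rat := (-1) ^+ k.

(** Apply an odd-degree map f at each vertex (vertices totally ordered by the
    pre-order traversal of the planar representative: root, left subtree,
    right subtree), with the Koszul sign (-1)^(degrees of earlier vertices).
    [f d l r] is the (coefficient, new decoration) produced at a vertex
    decorated d with inputs l and r, or None if the map kills it. *)
Fixpoint at_each (f : deco -> tree -> tree -> option (rat * deco)) (t : tree) : lc :=
  match t with
  | Leaf _ => [::]
  | Node d l r =>
      (if f d l r is Some (c, d') then [:: (c, Node d' l r)] else [::])
      ++ [seq (sgn (deco_deg d) * q.1, Node d q.2 r) | q <- at_each f l]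
      ++ [seq (sgn (deco_deg d + tree_deg l) * q.1, Node d l q.2) | q <- at_each f r]
  end.

Definition dpsi_tree (t : tree) : lc :=
  at_each (fun d _ _ => if d is Mu then Some (1, Be) else None) t.

Definition omega (l r : tree) : nat := (nleaves l * nleaves r)%N.

Definition H_tree (t : tree) : lc :=
  at_each (fun d l r => if d is Be
             then Some ((omega l r)%:R / ('C(nvert t + 1, 2))%:R, Mu)
             else None) t.

Definition lin (g : tree -> lc) (x : lc) : lc :=
  flatten [seq [seq (p.1 * q.1, q.2) | q <- g p.2] | p <- x].

Definition dpsi (x : lc) : lc := lin dpsi_tree x.
Definition Hmap (x : lc) : lc := lin H_tree x.

(** d_psi H + H d_psi (sum of formal combinations = concatenation). *)
Definition dH_Hd (x : lc) : lc := dpsi (Hmap x) ++ Hmap (dpsi x).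

(* Main.v *)
Require Import Defs.
From mathcomp Require Import all_boot all_order all_algebra.
From mathcomp Require Import zify ring.
Set Implicit Arguments. Unset Strict Implicit. Unset Printing Implicit Defensive.
Import Order.TTheory GRing.Theory Num.Theory.
Local Open Scope ring_scope.

Definition ev (y : lc) (F : tree -> rat) : rat := \sum_(p <- y) p.1 * F p.2.

Lemma ev_nil F : ev [::] F = 0. Proof. by rewrite /ev big_nil. Qed.
Lemma ev_cat x y F : ev (x ++ y) F = ev x F + ev y F.
Proof. by rewrite /ev big_cat. Qed.
Lemma eq_ev y F F' : (forall q, F q = F' q) -> ev y F = ev y F'.
Proof. by move=> h; rewrite /ev; apply: eq_bigr => p _; rewrite h. Qed.
Lemma ev_all y (P : pred tree) F F' : all (fun p => P p.2) y ->
  (forall q, P q -> F q = F' q) -> ev y F = ev y F'.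
Proof.
move=> ha h; rewrite /ev; elim: y ha => [|p y IH] /=; first by rewrite !big_nil.
by case/andP=> hp hy; rewrite !big_cons h // IH.
Qed.
Lemma ev_scale y k F : ev y (fun q => k * F q) = k * ev y F.
Proof. by rewrite /ev mulr_sumr; apply: eq_bigr => p _; rewrite mulrCA. Qed.
Lemma ev_add y F F' : ev y (fun q => F q + F' q) = ev y F + ev y F'.
Proof. by rewrite /ev -big_split; apply: eq_bigr => p _; rewrite mulrDr. Qed.
Lemma ev_swap x y K : ev x (fun q => ev y (K q)) = ev y (fun u => ev x (fun q => K q u)).
Proof.
rewrite /ev. under eq_bigr do rewrite mulr_sumr.
rewrite exchange_big /=; apply: eq_bigr => q _; rewrite mulr_sumr.
by apply: eq_bigr => p _; rewrite mulrCA.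
Qed.
Lemma ev_lin g x F : ev (lin g x) F = ev x (fun t => ev (g t) F).
Proof.
elim: x => [|p x IH]; first by rewrite /lin /= /ev !big_nil.
rewrite /lin /= ev_cat -/(lin g x) IH /ev big_cons big_map mulr_sumr.
congr (_ + _); apply: eq_bigr => q _; by rewrite mulrA.
Qed.
Lemma coef_ev x S : coef x S = ev x (fun T => if tree_eqb T S then 1 else 0).
Proof.
rewrite /coef /ev big_mkcond /=; apply: eq_bigr => p _.
by case: (tree_eqb _ _); rewrite ?mulr1 ?mulr0.
Qed.

Lemma ev_node f d l r F : ev (at_each f (Node d l r)) F =
  (if f d l r is Some (c, d') then c * F (Node d' l r) else 0)
  + sgn (deco_deg d) * ev (at_each f l) (fun q => F (Node d q r))
  + sgn (deco_deg d + tree_deg l) * ev (at_each f r) (fun u => F (Node d l u)).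
Proof.
rewrite /= !ev_cat /ev !big_map !mulr_sumr addrA; congr (_ + _ + _).
- by case: (f d l r) => [[c d']|]; rewrite ?big_cons ?big_nil ?addr0.
- by apply: eq_bigr => p _; rewrite mulrA.
- by apply: eq_bigr => p _; rewrite mulrA.
Qed.

Lemma at_each_prop f a b t :
  (forall d l r c d', f d l r = Some (c, d') -> (deco_deg d' + a = deco_deg d + b)%N) ->
  all (fun p => [&& (tree_deg p.2 + a == tree_deg t + b)%N,
                    nleaves p.2 == nleaves t & nvert p.2 == nvert t]) (at_each f t).
Proof.
move=> hf; elim: t => [i|d l IHl r IHr] //=.
rewrite !all_cat; apply/and3P; split.
- case E: (f d l r) => [[c d']|] //=; rewrite andbT /=.
  move: (hf _ _ _ _ _ E) => h; rewrite !eqxx andbT; apply/eqP; lia.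
- rewrite all_map; apply: sub_all IHl => p /and3P[/eqP h1 /eqP h2 /eqP h3] /=.
  apply/and3P; split; apply/eqP; lia.
- rewrite all_map; apply: sub_all IHr => p /and3P[/eqP h1 /eqP h2 /eqP h3] /=.
  apply/and3P; split; apply/eqP; lia.
Qed.

Definition fD : deco -> tree -> tree -> option (rat * deco) :=
  fun d _ _ => if d is Mu then Some (1, Be) else None.
Definition fH (c : rat) : deco -> tree -> tree -> option (rat * deco) :=
  fun d l r => if d is Be then Some ((omega l r)%:R / c, Mu) else None.

Fixpoint Om (t : tree) : nat :=
  match t with Leaf _ => 0%N | Node _ l r => (omega l r + Om l + Om r)%N end.

Definition shp a b t q := [&& (tree_deg q + a == tree_deg t + b)%N,
                    nleaves q == nleaves t & nvert q == nvert t].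
Lemma fD_prop t : all (fun p => shp 0 1 t p.2) (at_each fD t).
Proof. by apply: at_each_prop => [[|]] l r c d' //= [_ <-]. Qed.
Lemma fH_prop c t : all (fun p => shp 1 0 t p.2) (at_each (fH c) t).
Proof. by apply: at_each_prop => [[|]] l r c' d' //= [_ <-]. Qed.

Lemma sgnS k : sgn k.+1 = - sgn k.
Proof. by rewrite /sgn exprS mulN1r. Qed.

Lemma evD_sgn k l F : ev (at_each fD l) (fun q => sgn (k + tree_deg q) * F q)
  = - sgn (k + tree_deg l) * ev (at_each fD l) F.
Proof.
rewrite -ev_scale; apply: (ev_all (P := shp 0 1 l) (fD_prop l)) => q /and3P[/eqP h _ _].
by rewrite addn0 in h; rewrite h addn1 addnS sgnS.
Qed.
Lemma evH_sgn c k l F : ev (at_each (fH c) l) (fun q => sgn (k + tree_deg q) * F q)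
  = - sgn (k + tree_deg l) * ev (at_each (fH c) l) F.
Proof.
rewrite -ev_scale; apply: (ev_all (P := shp 1 0 l) (fH_prop c l)) => q /and3P[/eqP h _ _].
by rewrite addn0 in h; rewrite -h addn1 addnS sgnS opprK.
Qed.
Lemma evD_lv l (h : nat -> rat) F : ev (at_each fD l) (fun q => h (nleaves q) * F q)
  = h (nleaves l) * ev (at_each fD l) F.
Proof.
rewrite -ev_scale; apply: (ev_all (P := shp 0 1 l) (fD_prop l)) => q /and3P[_ /eqP h2 _].
by rewrite h2.
Qed.

Lemma ev0 y : ev y (fun=> 0) = 0.
Proof. by rewrite /ev big1 // => p _; rewrite mulr0. Qed.
Lemma ev_one y F : ev y (fun q => 1 * F q) = ev y F.
Proof. by rewrite ev_scale mul1r. Qed.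
Lemma sgn1 : sgn 1 = -1. Proof. by []. Qed.
Lemma sgn2 : sgn 2 = 1. Proof. by rewrite /sgn expr2 mulN1r opprK. Qed.
Lemma sgn1D x : sgn (1 + x) = - sgn x. Proof. by rewrite add1n sgnS. Qed.
Lemma sgn2D x : sgn (2 + x) = sgn x. Proof. by rewrite -addn1 -addnA add1n !sgnS opprK. Qed.

Lemma evD_Mu l r F : ev (at_each fD (Node Mu l r)) F = F (Node Be l r)
  + (-1) * ev (at_each fD l) (fun q => F (Node Mu q r))
  + (- sgn (tree_deg l)) * ev (at_each fD r) (fun u => F (Node Mu l u)).
Proof. by rewrite (ev_node fD Mu l r F) /= mul1r sgn1D. Qed.
Lemma evD_Be l r F : ev (at_each fD (Node Be l r)) F =
  1 * ev (at_each fD l) (fun q => F (Node Be q r))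
  + sgn (tree_deg l) * ev (at_each fD r) (fun u => F (Node Be l u)).
Proof. by rewrite (ev_node fD Be l r F) /= add0r sgn2 sgn2D. Qed.
Lemma evH_Mu c l r F : ev (at_each (fH c) (Node Mu l r)) F =
  (-1) * ev (at_each (fH c) l) (fun q => F (Node Mu q r))
  + (- sgn (tree_deg l)) * ev (at_each (fH c) r) (fun u => F (Node Mu l u)).
Proof. by rewrite (ev_node (fH c) Mu l r F) /= add0r sgn1D. Qed.
Lemma evH_Be c l r F : ev (at_each (fH c) (Node Be l r)) F =
  (omega l r)%:R / c * F (Node Mu l r)
  + 1 * ev (at_each (fH c) l) (fun q => F (Node Be q r))
  + sgn (tree_deg l) * ev (at_each (fH c) r) (fun u => F (Node Be l u)).
Proof. by rewrite (ev_node (fH c) Be l r F) /= sgn2 sgn2D. Qed.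
Lemma evD_nsgn l F : ev (at_each fD l) (fun q => - sgn (tree_deg q) * F q)
  = sgn (tree_deg l) * ev (at_each fD l) F.
Proof.
rewrite -ev_scale; apply: (ev_all (P := shp 0 1 l) (fD_prop l)) => q /and3P[/eqP h _ _].
by rewrite addn0 in h; rewrite h addn1 sgnS opprK.
Qed.
Lemma evH_nsgn c l F : ev (at_each (fH c) l) (fun q => - sgn (tree_deg q) * F q)
  = sgn (tree_deg l) * ev (at_each (fH c) l) F.
Proof.
rewrite -ev_scale; apply: (ev_all (P := shp 1 0 l) (fH_prop c l)) => q /and3P[/eqP h _ _].
by rewrite addn0 in h; rewrite -h addn1 sgnS.
Qed.
Lemma evH_sgn0 c l F : ev (at_each (fH c) l) (fun q => sgn (tree_deg q) * F q)
  = - sgn (tree_deg l) * ev (at_each (fH c) l) F.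
Proof. by rewrite (evH_sgn c 0). Qed.
Lemma evD_sgn0 l F : ev (at_each fD l) (fun q => sgn (tree_deg q) * F q)
  = - sgn (tree_deg l) * ev (at_each fD l) F.
Proof. by rewrite (evD_sgn 0). Qed.

Lemma sgnE k : sgn k = if odd k then -1 else 1.
Proof. by rewrite /sgn -signr_odd; case: odd. Qed.
Lemma evD_omL c l r F : ev (at_each fD l) (fun q => (omega q r)%:R / c * F q)
  = (omega l r)%:R / c * ev (at_each fD l) F.
Proof.
rewrite -ev_scale; apply: (ev_all (P := shp 0 1 l) (fD_prop l)) => q /and3P[_ /eqP h _].
by rewrite /omega h.
Qed.
Lemma evD_omR c l r F : ev (at_each fD r) (fun q => (omega l q)%:R / c * F q)
  = (omega l r)%:R / c * ev (at_each fD r) F.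
Proof.
rewrite -ev_scale; apply: (ev_all (P := shp 0 1 r) (fD_prop r)) => q /and3P[_ /eqP h _].
by rewrite /omega h.
Qed.

Lemma main c t G :
  ev (at_each (fH c) t) (fun q => ev (at_each fD q) G)
  + ev (at_each fD t) (fun q => ev (at_each (fH c) q) G) = (Om t)%:R / c * G t.
Proof.
elim: t G => [i|d l IHl r IHr] G; first by rewrite /ev /= !big_nil addr0 !mul0r.
have hl := IHl (fun q => G (Node d q r)).
have hr := IHr (fun u => G (Node d l u)).
have sw1 := ev_swap (at_each (fH c) r) (at_each fD l) (fun q q0 => G (Node d q0 q)).
have sw2 := ev_swap (at_each fD r) (at_each (fH c) l) (fun q q0 => G (Node d q0 q)).
case: d hl hr sw1 sw2 => hl hr sw1 sw2.
- rewrite (evH_Mu c l r (fun q => ev (at_each fD q) G)).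
  rewrite (evD_Mu l r (fun q => ev (at_each (fH c) q) G)).
  rewrite (evH_Be c l r G).
  rewrite (eq_ev _ (fun q => evD_Mu q r G)) (eq_ev _ (fun q => evD_Mu l q G)).
  rewrite (eq_ev _ (fun q => evH_Mu c q r G)) (eq_ev _ (fun q => evH_Mu c l q G)).
  rewrite !ev_add !ev_scale ?evD_nsgn ?evH_nsgn ?evD_sgn0 ?evH_sgn0.
  rewrite sw1 sw2.
  have E1 : ev (at_each fD l) (fun q => ev (at_each (fH c) q) (fun q0 => G (Node Mu q0 r)))
    = (Om l)%:R / c * G (Node Mu l r) - ev (at_each (fH c) l) (fun q => ev (at_each fD q) (fun q0 => G (Node Mu q0 r))).
    by rewrite -hl addrAC subrr add0r.
  have E2 : ev (at_each fD r) (fun q => ev (at_each (fH c) q) (fun q0 => G (Node Mu l q0)))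
    = (Om r)%:R / c * G (Node Mu l r) - ev (at_each (fH c) r) (fun q => ev (at_each fD q) (fun q0 => G (Node Mu l q0))).
    by rewrite -hr addrAC subrr add0r.
  rewrite E1 E2 /= !natrD sgnE; case: odd; ring.
- rewrite (evH_Be c l r (fun q => ev (at_each fD q) G)).
  rewrite (evD_Be l r (fun q => ev (at_each (fH c) q) G)).
  rewrite (evD_Mu l r G).
  rewrite (eq_ev _ (fun q => evD_Be q r G)) (eq_ev _ (fun q => evD_Be l q G)).
  rewrite (eq_ev _ (fun q => evH_Be c q r G)) (eq_ev _ (fun q => evH_Be c l q G)).
  rewrite !ev_add !ev_scale ?evD_nsgn ?evH_nsgn ?evD_sgn0 ?evH_sgn0 evD_omL evD_omR.
  rewrite sw1 sw2.
  have E1 : ev (at_each fD l) (fun q => ev (at_each (fH c) q) (fun q0 => G (Node Be q0 r)))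
    = (Om l)%:R / c * G (Node Be l r) - ev (at_each (fH c) l) (fun q => ev (at_each fD q) (fun q0 => G (Node Be q0 r))).
    by rewrite -hl addrAC subrr add0r.
  have E2 : ev (at_each fD r) (fun q => ev (at_each (fH c) q) (fun q0 => G (Node Be l q0)))
    = (Om r)%:R / c * G (Node Be l r) - ev (at_each (fH c) r) (fun q => ev (at_each fD q) (fun q0 => G (Node Be l q0))).
    by rewrite -hr addrAC subrr add0r.
  rewrite E1 E2 /= !natrD sgnE; case: odd; ring.
Qed.

Lemma bin2D a b : 'C(a + b, 2) = ('C(a, 2) + 'C(b, 2) + a * b)%N.
Proof.
elim: b => [|b IH]; first by rewrite addn0 bin0n muln0 !addn0.
rewrite addnS !binS !bin1 IH; lia.
Qed.
Lemma Om_bin t : Om t = 'C(nleaves t, 2).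
Proof.
elim: t => [i|d l IHl r IHr] //=.
by rewrite bin2D IHl IHr /omega; lia.
Qed.
Lemma nleaves_nvert t : nleaves t = (nvert t + 1)%N.
Proof. elim: t => [i|d l IHl r IHr] //=; lia. Qed.
Lemma size_labels t : size (leaf_labels t) = nleaves t.
Proof. by elim: t => [i|d l IHl r IHr] //=; rewrite size_cat IHl IHr. Qed.

Lemma per_tree t G : ev (H_tree t) (fun q => ev (dpsi_tree q) G)
  + ev (dpsi_tree t) (fun q => ev (H_tree q) G)
  = (Om t)%:R / ('C(nvert t + 1, 2))%:R * G t.
Proof.
rewrite -(main ('C(nvert t + 1, 2))%:R t G); congr (_ + _).
apply: (ev_all (P := shp 0 1 t) (fD_prop t)) => q /and3P[_ _ /eqP h].
by rewrite /H_tree h.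
Qed.

Theorem lemma2p3 (n : nat) (hn : (1 <= n)%N) (x : lc)
  (hx : all (fun p => valid_tree n p.2) x) (S : tree) :
  coef (dH_Hd x) S = (if (2 <= n)%N then coef x S else 0).
Proof.
pose I : tree -> rat := fun T => if tree_eqb T S then 1 else 0.
rewrite !coef_ev -/I /dH_Hd ev_cat /dpsi /Hmap !ev_lin -ev_add.
have key : forall t, valid_tree n t ->
  ev (H_tree t) (fun q => ev (dpsi_tree q) I) + ev (dpsi_tree t) (fun q => ev (H_tree q) I)
  = (if (2 <= n)%N then I t else 0).
  move=> t /andP[hp _]; rewrite per_tree Om_bin -nleaves_nvert.
  have hs : nleaves t = n by rewrite -size_labels (perm_size hp) size_iota.
  rewrite hs; case: ifP => h2.
    rewrite divff ?mul1r // pnatr_eq0 -lt0n bin_gt0 //.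
  have -> : n = 1%N by lia.
  rewrite bin_small // (_ : 0%:R = 0 :> rat) // !mul0r //.
rewrite (ev_all (P := valid_tree n) hx key).
by case: ifP => _ //; rewrite ev0.
Qed.
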